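(* Let $m\ge1$, let $Dic_m=\langle x,y\mid x^{2m},\,y^2x^m,\,y^{-1}xyx\rangle$ and $G=\mathbb{Z}/2m\mathbb{Z}\times\mathbb{Z}/2\mathbb{Z}=\langle x,y\mid x^{2m},y^2,[x,y]\rangle$. Let \[ P=\sum_{k=0}^{2m-1}\alpha_kx^k+\sum_{k=0}^{2m-1}\beta_k\,yx^k, \] regarded (with the same coefficients and words) both as an element of $\mathbb{C}[Dic_m]$ and of $\mathbb{C}G$, where the coefficients $\alpha_k$ are real and $P$ is reciprocal in both $\mathbb{C}[Dic_m]$ and $\mathbb{C}G$. Let $k=\sum_k(|\alpha_k|+|\beta_k|)$ and $|\lambda|<1/k$. Then \[ m_{G}(P,\lambda)=m_{Dic_m}(P,\lambda). \]
   Context: For a group $\Gamma$ and $Q=\sum_{g\in\Gamma}c_g g\in\mathbb{C}\Gamma$ (finite sum), the reciprocal is $Q^*=\sum_g\overline{c_g}\,g^{-1}$, and $Q$ is reciprocal if $Q=Q^*$. For reciprocal $P\in\mathbb{C}\Gamma$ with $l_1$-norm $k=\sum_g|c_g|$ and $|\lambda|<1/k$, define $m_\Gamma(P,\lambda)=-\sum_{n\ge1}a_n\lambda^n/n$, where $a_n$ is the coefficient of the identity element of $\Gamma$ in $P^n$. *)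

(* Defs.v *)
From mathcomp Require Import all_boot all_order all_algebra.
From mathcomp Require Import complex.
From mathcomp Require Import all_classical all_reals all_analysis.
Set Implicit Arguments. Unset Strict Implicit. Unset Printing Implicit Defensive.
Import Order.TTheory GRing.Theory Num.Theory.
Local Open Scope ring_scope.

(* Elements of both groups are written in normal form  y^b x^a,
   encoded as the pair (a, b) with a : 'Z_(2m) and b : bool. *)
Definition grp (m : nat) := ('Z_(m.*2) * bool)%type.

(* Dic_m = < x, y | x^(2m), y^2 x^m, y^-1 x y x >:
   x^a y = y x^(-a) and y^2 = x^m (central), hence
   (y^b1 x^a1)(y^b2 x^a2) = y^(b1 xor b2) x^(m[b1&&b2] + (-1)^b2 a1 + a2). *)
Definition dic_mul (m : nat) (g h : grp m) : grp m :=
  ((if g.2 && h.2 then (m%:R : 'Z_(m.*2)) else 0)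
     + (if h.2 then - g.1 else g.1) + h.1, g.2 (+) h.2).

Definition ab_mul (m : nat) (g h : grp m) : grp m := (g.1 + h.1, g.2 (+) h.2).

Definition grp_one (m : nat) : grp m := (0, false).

Section GroupAlgebra.
Variable R : realType.
Variable T : finType.
Variable mul : T -> T -> T.
Variable one : T.

Definition galg := T -> R[i].

Definition gconv (f g : galg) : galg :=
  fun c => \sum_(u : T) \sum_(v : T | mul u v == c) f u * g v.

Definition gdelta1 : galg := fun c => if c == one then 1 else 0.

Fixpoint gpow (P : galg) (n : nat) : galg :=
  if n is n'.+1 then gconv (gpow P n') P else gdelta1.

Definition acoef (P : galg) (n : nat) : R[i] := gpow P n one.

(* reciprocal: P* = sum conj(c_g) g^-1, i.e. P*(h) = conj(P(g)) where g h = 1 *)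
Definition reciprocal (P : galg) : Prop :=
  forall g h : T, mul g h = one -> P h = (P g)^*.

(* n-th term (n >= 0 indexes n+1 >= 1) of  m(P,lam) = - sum_{n>=1} a_n lam^n / n *)
Definition mterm (P : galg) (lam : R[i]) (n : nat) : R[i] :=
  - (acoef P n.+1 * lam ^+ n.+1 / (n.+1)%:R).

End GroupAlgebra.

Definition Pelt (R : realType) (m : nat) (alpha beta : 'Z_(m.*2) -> R[i])
  : grp m -> R[i] := fun g => if g.2 then beta g.1 else alpha g.1.

(* Main.v *)
Require Import Defs.
From mathcomp Require Import all_boot all_order all_algebra.
From mathcomp Require Import complex.
From mathcomp Require Import all_classical all_reals all_analysis.
From mathcomp Require Import ring.
Import Order.TTheory GRing.Theory Num.Theory.
Import numFieldNormedType.Exports.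
Local Open Scope classical_set_scope.
Local Open Scope ring_scope.

Section Alg.
Variable m : nat.
Hypothesis hm : (1 <= m)%N.

Lemma mm : (m%:R + m%:R : 'Z_(m.*2)) = 0.
Proof.
rewrite -natrD addnn pchar_Zp //.
by rewrite -addnn; apply: (leq_trans _ (leq_add hm hm)).
Qed.

Definition tau (g : grp m) : grp m :=
  (if g.2 then m%:R - g.1 else - g.1, g.2).

Lemma tauK : involutive tau.
Proof.
by case=> a [] /=; rewrite /tau /= ?opprB ?opprK // addrC subrK.
Qed.

Lemma tau_inj : injective tau. Proof. exact: inv_inj tauK. Qed.

Lemma tau_one : tau (grp_one m) = grp_one m.
Proof. by rewrite /tau /grp_one /= oppr0. Qed.

Lemma tau_ab g h : tau (ab_mul g h) = ab_mul (tau g) (tau h).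
Proof.
case: g => a [] ; case: h => c [] ; rewrite /tau /ab_mul /=; congr pair.
- by rewrite addrACA mm add0r opprD.
- by rewrite opprD addrA.
- by rewrite opprD addrCA.
- by rewrite opprD.
Qed.

Lemma dic_tau u v : dic_mul u v = ab_mul (if v.2 then tau u else u) v.
Proof.
case: u => a [] ; case: v => c [] ; rewrite /tau /ab_mul /dic_mul /=; congr pair; by rewrite add0r.
Qed.

Variable R : realType.

Definition inv (Q : grp m -> R[i]) := forall g, Q (tau g) = Q g.

Lemma conv_eq (Q P : grp m -> R[i]) : inv Q ->
  gconv (@dic_mul m) Q P = gconv (@ab_mul m) Q P.
Proof.
move=> iQ; apply: boolp.funext => c; rewrite /gconv.
rewrite (eq_bigr (fun u => \sum_v (if dic_mul u v == c then Q u * P v else 0)));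
  last by move=> u _; rewrite big_mkcond.
rewrite [RHS](eq_bigr (fun u => \sum_v (if ab_mul u v == c then Q u * P v else 0)));
  last by move=> u _; rewrite big_mkcond.
rewrite exchange_big [RHS]exchange_big; apply: eq_bigr => v _.
rewrite [RHS](reindex_inj (h := fun u => if v.2 then tau u else u)) /=;
  last by case: (v.2) => //; exact: tau_inj.
apply: eq_bigr => u _; rewrite dic_tau.
by case: (v.2) => //; rewrite iQ.
Qed.

Lemma inv_conv (Q P : grp m -> R[i]) : inv Q -> inv P ->
  inv (gconv (@ab_mul m) Q P).
Proof.
move=> iQ iP c; rewrite /gconv.
rewrite (reindex_inj tau_inj); apply: eq_bigr => u _.
rewrite [LHS]big_mkcond [RHS]big_mkcond [LHS](reindex_inj tau_inj); apply: eq_big => // v _ /=.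
by rewrite -tau_ab (inj_eq tau_inj) iQ iP.
Qed.

Lemma inv_delta : inv (@gdelta1 R _ (grp_one m)).
Proof.
move=> g; rewrite /gdelta1 -{1}tau_one (inj_eq tau_inj) //.
Qed.

Lemma gpow_eq (P : grp m -> R[i]) : inv P -> forall n,
  gpow (@dic_mul m) (grp_one m) P n = gpow (@ab_mul m) (grp_one m) P n /\
  inv (gpow (@ab_mul m) (grp_one m) P n).
Proof.
move=> iP; elim=> [|n [IH1 IH2]] /=; first by split=> //; exact: inv_delta.
by rewrite IH1 conv_eq //; split=> //; apply: inv_conv.
Qed.

End Alg.
Section Bound.
Variable R : realType.
Variable T : finType.
Variable mul : T -> T -> T.
Variable one : T.

Lemma l1_conv (Q P : T -> R[i]) :
  \sum_c `|gconv mul Q P c| <= (\sum_c `|Q c|) * (\sum_c `|P c|).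
Proof.
rewrite /gconv.
apply: (le_trans (y := \sum_c \sum_u \sum_(v | mul u v == c) `|Q u| * `|P v|)).
  apply: ler_sum => c _; apply: (le_trans (ler_norm_sum _ _ _)).
  apply: ler_sum => u _; apply: (le_trans (ler_norm_sum _ _ _)).
  by apply: ler_sum => v _; rewrite normrM.
rewrite exchange_big mulr_suml; apply: ler_sum => u _.
rewrite mulr_sumr [X in _ <= X](partition_big (mul u) xpredT) //=.
Qed.

Lemma gpow_l1 (P : T -> R[i]) n :
  \sum_c `|gpow mul one P n c| <= (\sum_c `|P c|) ^+ n.
Proof.
elim: n => [|n IH] /=.
  rewrite expr0 (bigD1 one) //= big1 ?addr0 /gdelta1 ?eqxx ?normr1 //.
  by move=> c /negbTE ->; rewrite normr0.
apply: (le_trans (l1_conv _ _)); rewrite exprSr.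
by apply: ler_wpM2r => //; apply: sumr_ge0 => c _.
Qed.

Lemma acoef_bound (P : T -> R[i]) n :
  `|acoef mul one P n| <= (\sum_c `|P c|) ^+ n.
Proof.
apply: le_trans (gpow_l1 P n).
rewrite /acoef (bigD1 one) //= lerDl; exact: sumr_ge0.
Qed.
End Bound.

Notation cRe := complex.Re.
Notation cIm := complex.Im.
Section Cplx.
Variable R : realType.

Lemma normi : `|'i%C| = 1 :> R[i].
Proof. by rewrite normc_def /= expr0n /= add0r expr1n sqrtr1. Qed.

Lemma normRC (x : R) : `|x%:C%C| = (`|x|)%:C%C :> R[i].
Proof. by rewrite normc_def /= expr0n /= addr0 sqrtr_sqr. Qed.

Lemma norm_ReIm (z : R[i]) : `|z| <= (`|cRe z|)%:C%C + (`|cIm z|)%:C%C.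
Proof.
rewrite {1}[z]complexE; apply: (le_trans (ler_normD _ _)).
by rewrite normrM normi mul1r !normRC.
Qed.

Lemma Im_le (z : R[i]) : (`|cIm z|)%:C%C <= `|z|.
Proof.
have := normc_ge_Re (z * 'i%C); rewrite ReiNIm normrN normrM normi mulr1.
done.
Qed.

Lemma cvg_complex (f : nat -> R[i]) (a b : R) :
  (fun n => cRe (f n)) @ \oo --> a -> (fun n => cIm (f n)) @ \oo --> b ->
  (f : nat -> R[i]^o) @ \oo --> ((a +i* b)%C : R[i]^o).
Proof.
move=> /cvgrPdist_lt ha /cvgrPdist_lt hb.
apply/cvgrPdist_lt => e e0.
have := e0; rewrite ltcE /= => /andP[/eqP Ie Re0].
have eE : e = (cRe e)%:C%C by move: Ie; clear; case: e => x y /= ->.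
have e2 : 0 < cRe e / 2 by rewrite divr_gt0.
near=> n.
have h1 : `|a - cRe (f n)| < cRe e / 2 by near: n; exact: ha.
have h2 : `|b - cIm (f n)| < cRe e / 2 by near: n; exact: hb.
apply: (le_lt_trans (norm_ReIm _)).
have -> : cRe ((a +i* b)%C - f n) = a - cRe (f n) by case: (f n).
have -> : cIm ((a +i* b)%C - f n) = b - cIm (f n) by case: (f n).
rewrite eE -rmorphD ltcR.
by rewrite [cRe e]splitr ltrD.
Unshelve. all: by end_near.
Qed.
End Cplx.

Lemma ReD (R : realType) (x y : R[i]) : cRe (x + y) = cRe x + cRe y.
Proof. by case: x; case: y. Qed.
Lemma ImD (R : realType) (x y : R[i]) : cIm (x + y) = cIm x + cIm y.
Proof. by case: x; case: y. Qed.

Lemma real_series_cvg (R : realType) (s : nat -> R) (rho : R) :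
  0 <= rho -> rho < 1 -> (forall n, `|s n| <= rho ^+ n.+1) ->
  cvgn (series s).
Proof.
move=> r0 r1 hs; apply: normed_cvg.
apply: (series_le_cvg (v_ := geometric rho rho)).
- by move=> n /=; exact: normr_ge0.
- by move=> n; rewrite /geometric /= mulr_ge0 // exprn_ge0.
- by move=> n; rewrite /geometric /= -exprS.
- by apply: is_cvg_geometric_series; rewrite ger0_norm.
Qed.

Theorem theorem8p1 (R : realType) (m : nat) (hm : (1 <= m)%N)
  (alpha beta : 'Z_(m.*2) -> R[i])
  (halpha : forall k, alpha k \is Num.real)
  (hrecD : reciprocal (@dic_mul m) (grp_one m) (Pelt alpha beta))
  (hrecG : reciprocal (@ab_mul m) (grp_one m) (Pelt alpha beta))
  (lam : R[i])
  (hlam : `|lam| * (\sum_(k : 'Z_(m.*2)) (`|alpha k| + `|beta k|)) < 1) :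
  exists l : R[i]^o,
    series (mterm (@ab_mul m) (grp_one m) (Pelt alpha beta) lam : nat -> R[i]^o) @ \oo --> l /\
    series (mterm (@dic_mul m) (grp_one m) (Pelt alpha beta) lam : nat -> R[i]^o) @ \oo --> l.
Proof.
have iP : inv m R (Pelt alpha beta).
  case=> a [] /=; rewrite /tau /Pelt /=.
  - have hG x : beta (-x) = (beta x)^*.
      by apply: (hrecG (x, true) (-x, true)); rewrite /ab_mul /grp_one /= subrr.
    have hD x : beta (x - m%:R) = (beta x)^*.
      apply: (hrecD (x, true) (x - m%:R, true)); rewrite /dic_mul /grp_one /=.
      by congr pair; rewrite addrA subrK subrr.
    by have := hG (a - m%:R); rewrite hD conjCK opprB.
  - have := hrecG (a, false) (-a, false); rewrite /Pelt /= => ->.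
      by rewrite conj_Creal.
    by rewrite /ab_mul /grp_one /= subrr.
have heq : mterm (@dic_mul m) (grp_one m) (Pelt alpha beta) lam =
           mterm (@ab_mul m) (grp_one m) (Pelt alpha beta) lam.
  apply: boolp.funext => n; rewrite /mterm /acoef.
  by rewrite (proj1 (@gpow_eq m hm R _ iP n.+1)).
rewrite heq.
set u := mterm (@ab_mul m) (grp_one m) (Pelt alpha beta) lam.
set K := \sum_c `|Pelt alpha beta c|.
have hK : K = \sum_(k : 'Z_(m.*2)) (`|alpha k| + `|beta k|).
  rewrite /K (eq_bigr (fun k => \sum_b `|Pelt alpha beta (k, b)|)); last first.
    by move=> k _; rewrite big_bool /Pelt /= addrC.
  rewrite pair_big; apply: eq_big => // -[]. 
set r := `|lam| * K.
have r0 : 0 <= r by rewrite mulr_ge0 // sumr_ge0.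
have r1 : r < 1 by rewrite /r hK.
have hu n : `|u n| <= r ^+ n.+1.
  rewrite /u /mterm normrN !normrM normfV normr_nat.
  apply: (le_trans (ler_piMr _ _)).
  - by rewrite mulr_ge0.
  - by rewrite invf_le1 // ler1n.
  rewrite /r exprMn mulrC normrX; apply: ler_wpM2l; first exact: exprn_ge0.
  exact: acoef_bound.
set rho := cRe r.
have rE : r = rho%:C%C by move: (ger0_Im r0); rewrite /rho; case: (r) => x y /= ->.
have rho0 : 0 <= rho by move: r0; rewrite rE lecE /= => /andP[].

have rho1 : rho < 1 by move: r1; rewrite rE ltcE /= => /andP[].
have hs n : `|cRe (u n)| <= rho ^+ n.+1.
  rewrite -lecR; apply: (le_trans (normc_ge_Re _)).
  apply: (le_trans (hu n)); rewrite rE.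
  by rewrite -rmorphXn.
have ht n : `|cIm (u n)| <= rho ^+ n.+1.
  rewrite -lecR; apply: (le_trans (@Im_le R (u n))).
  apply: (le_trans (hu n)); rewrite rE.
  by rewrite -rmorphXn.
have cs := @real_series_cvg R _ _ rho0 rho1 hs.
have ct := @real_series_cvg R _ _ rho0 rho1 ht.
have Re_series n : cRe (series u n) = series (fun k => cRe (u k)) n.
  by rewrite /series /= (big_morph _ (@ReD R) (erefl (cRe (0 : R[i])))).
have Im_series n : cIm (series u n) = series (fun k => cIm (u k)) n.
  by rewrite /series /= (big_morph _ (@ImD R) (erefl (cIm (0 : R[i])))).
exists ((limn (series (fun k => cRe (u k))) +i* limn (series (fun k => cIm (u k))))%C).
have H : (series u : nat -> R[i]^o) @ \oo -->
   ((limn (series (fun k => cRe (u k))) +i* limn (series (fun k => cIm (u k))))%C : R[i]^o).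
  apply: cvg_complex.
  - by under eq_fun do rewrite Re_series.
  - by under eq_fun do rewrite Im_series.
by split.
Qed.
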